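(* Let $G=(V,E)$ be a simple connected graph with $n=|V|\ge 2$ vertices and diameter $d=\mathrm{diam}(G)$. Then the pebbling number of $G$ satisfies $$f(G) \leq \left(n + \left\lfloor \frac{n-1}{d} \right\rfloor - 1\right) 2^{d-1} - n + 2.$$
   Context: A distribution of pebbles on $G$ is a function $D: V \to \mathbb{N}=\{0,1,2,\dots\}$; its size is $|D|=\sum_{v\in V} D(v)$. A pebbling step removes two pebbles from some vertex and places one pebble on an adjacent vertex. For a root vertex $v$, $D$ is $v$-solvable if, after some finite sequence of pebbling steps starting from $D$, at least one pebble is on $v$; $D$ is solvable if it is $v$-solvable for every $v\in V$. The pebbling number $f(G)$ is the smallest integer $N$ such that every distribution of size $N$ on $G$ is solvable. *)

(* Defs.v *)
From mathcomp Require Import all_boot.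
Set Implicit Arguments. Unset Strict Implicit. Unset Printing Implicit Defensive.

Definition simple_graph (T : finType) (e : rel T) : Prop :=
  symmetric e /\ irreflexive e.

Definition connected_graph (T : finType) (e : rel T) : Prop :=
  forall u v : T, connect e u v.

Definition walk_len (T : finType) (e : rel T) (k : nat) (u v : T) : bool :=
  [exists p : k.-tuple T, path e u p && (last u p == v)].

(* graph distance: least k with a walk of length k (a shortest walk has
   length < #|T| in a connected graph; returns #|T| if none exists) *)
Definition dist (T : finType) (e : rel T) (u v : T) : nat :=
  find (fun k => walk_len e k u v) (iota 0 #|T|).

Definition diam (T : finType) (e : rel T) : nat :=
  \max_(u : T) \max_(v : T) dist e u v.

Definition distribution (T : finType) := {ffun T -> nat}.

Definition dsize (T : finType) (D : distribution T) : nat := \sum_(v : T) D v.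

Definition pebble_step (T : finType) (e : rel T) (D D' : distribution T) : Prop :=
  exists u w : T, [/\ e u w, 2 <= D u &
    D' = [ffun x => if x == w then (D x - (x == u) * 2) + 1
                    else D x - (x == u) * 2]].

Inductive reachable (T : finType) (e : rel T) : distribution T -> distribution T -> Prop :=
| reach_refl D : reachable e D D
| reach_step D D' D'' : pebble_step e D D' -> reachable e D' D'' -> reachable e D D''.

Definition rooted_solvable (T : finType) (e : rel T) (D : distribution T) (r : T) : Prop :=
  exists D', reachable e D D' /\ 1 <= D' r.

Definition solvable (T : finType) (e : rel T) (D : distribution T) : Prop :=
  forall r : T, rooted_solvable e D r.

Definition all_solvable (T : finType) (e : rel T) (N : nat) : Prop :=
  forall D : distribution T, dsize D = N -> solvable e D.

(* f(G) <= B, where f(G) is the least N with all_solvable N *)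
Definition pebbling_number_le (T : finType) (e : rel T) (B : nat) : Prop :=
  exists N, N <= B /\ all_solvable e N.

(* Main.v *)
Require Import Defs.
From mathcomp Require Import all_boot zify.
From Stdlib Require Import Classical.

Section Peb.
Variables (T : finType) (e : rel T).

Definition addf (D E : distribution T) : distribution T := [ffun x => D x + E x].
Definition pt (u : T) (a : nat) : distribution T := [ffun x => if x == u then a else 0].
Definition deliv (D : distribution T) (v : T) (m : nat) := exists D', reachable e D D' /\ m <= D' v.

Lemma reach_trans D1 D2 D3 : reachable e D1 D2 -> reachable e D2 D3 -> reachable e D1 D3.
Proof.
elim=> [//|A B C HAB _ IH] H; exact: (reach_step HAB (IH H)).
Qed.

Lemma reach_add D D' E : reachable e D D' -> reachable e (addf D E) (addf D' E).
Proof.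
elim=> [A|A B C [u [w [Huw H2 ->]]] _ IH]; first exact: reach_refl.
apply: (reach_step _ IH); exists u, w; split => //.
  by rewrite /addf ffunE; lia.
apply/ffunP=> x; rewrite /addf !ffunE.
case: (x =P w) => _; case: (x =P u) => [->|_] /=; lia.
Qed.

Lemma addfC D E : addf D E = addf E D.
Proof. by apply/ffunP=> x; rewrite !ffunE addnC. Qed.

Lemma deliv_mono (D E : distribution T) v m : (forall x, E x <= D x) -> deliv E v m -> deliv D v m.
Proof.
move=> HED [D' [HR Hm]].
pose F : distribution T := [ffun x => D x - E x].
have -> : D = addf E F by apply/ffunP=> x; rewrite !ffunE; have := HED x; lia.
exists (addf D' F); split; first exact: reach_add.
by rewrite ffunE; lia.
Qed.

Lemma deliv_trans D D1 v m : reachable e D D1 -> deliv D1 v m -> deliv D v m.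
Proof. move=> H [D' [H1 H2]]; exists D'; split=> //; exact: reach_trans H1. Qed.

Lemma step_pt u w a : irreflexive e -> e u w -> reachable e (pt u (2 * a)) (pt w a).
Proof.
move=> Hirr Huw.
have Hne : u != w by apply/eqP=> Heq; move: Huw; rewrite Heq Hirr.
elim: a => [|a IH].
  have -> : pt u (2 * 0) = pt w 0 by apply/ffunP=> x; rewrite !ffunE; case: ifP; case: ifP.
  exact: reach_refl.
have Hst : pebble_step e (pt u (2 * a.+1)) (addf (pt u (2 * a)) (pt w 1)).
  exists u, w; split => //; first by rewrite ffunE eqxx; lia.
  apply/ffunP=> x; rewrite !ffunE.
  case: (x =P w) => [->|Hxw].
    rewrite eq_sym (negbTE Hne) /=; lia.
  case: (x =P u) => _ /=; lia.
apply: (reach_step Hst).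
have -> : pt w a.+1 = addf (pt w a) (pt w 1).
  by apply/ffunP=> x; rewrite !ffunE; case: ifP => //; lia.
exact: reach_add.
Qed.

Lemma move p u m : irreflexive e -> path e u p -> deliv (pt u (m * 2 ^ size p)) (last u p) m.
Proof.
move=> Hirr; elim: p u m => [|w p IH] u m /=.
  by move=> _; exists (pt u (m * 1)); split; [exact: reach_refl| rewrite ffunE eqxx muln1].
move=> /andP[Huw Hp].
apply: deliv_trans (IH w m Hp).
have -> : m * 2 ^ (size p).+1 = 2 * (m * 2 ^ size p) by rewrite expnS; lia.
exact: step_pt.
Qed.

Lemma deliv_combine v w a b y m1 m2 :
  deliv (pt v a) y m1 -> deliv (pt w b) y m2 -> deliv (addf (pt v a) (pt w b)) y (m1 + m2).
Proof.
move=> [D1 [H1 K1]] [D2 [H2 K2]].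
exists (addf D2 D1); split; last by rewrite ffunE; lia.
apply: (reach_trans _ _ _ (reach_add _ _ (pt w b) H1)).
rewrite [addf D1 _]addfC. exact: reach_add.
Qed.


Lemma dist_le u s : path e u s -> dist e u (last u s) <= size s.
Proof.
move=> Hp.
have W : walk_len e (size s) u (last u s).
  by apply/existsP; exists (in_tuple s); rewrite /= Hp eqxx.
rewrite /dist.
case: (ltnP (size s) #|T|) => Hs; last first.
  have := find_size (fun k => walk_len e k u (last u s)) (iota 0 #|T|).
  rewrite size_iota => H; exact: leq_trans H Hs.
rewrite leqNgt; apply/negP => Hlt.
have := before_find 0 Hlt; by rewrite nth_iota //= add0n W.
Qed.

Lemma dist_walk : connected_graph e -> forall u v,
  exists s, [/\ path e u s, last u s = v & size s = dist e u v].
Proof.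
move=> Hc u v.
have /connectP [p Hp ->] := Hc u v.
case: (shortenP Hp) => p' Hp' Hu _.
have Hsz : size p' < #|T|.
  have := max_card (mem (u :: p')); rewrite (card_uniqP Hu) /=; lia.
have W : walk_len e (size p') u (last u p').
  by apply/existsP; exists (in_tuple p'); rewrite /= Hp' eqxx.
have Hh : has (fun k => walk_len e k u (last u p')) (iota 0 #|T|).
  by apply/hasP; exists (size p'); rewrite ?mem_iota ?add0n.
have := nth_find 0 Hh; rewrite -/(dist e u (last u p')).
have Hlt : dist e u (last u p') < #|T| by have := Hh; rewrite has_find size_iota.
rewrite nth_iota // add0n => /existsP [q /andP [Hq /eqP Hl]].
by exists q; split => //; rewrite size_tuple.
Qed.

Lemma dist_diam u v : dist e u v <= diam e.
Proof.
exact: leq_trans (leq_bigmax (F := fun v => dist e u v) v)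
  (leq_bigmax (F := fun u => \max_(v : T) dist e u v) u).
Qed.


Lemma pt_le (D : distribution T) v a : a <= D v -> forall x, pt v a x <= D x.
Proof. by move=> H x; rewrite ffunE; case: (x =P v) => [->|]. Qed.

Lemma path_split v p i : path e v p ->
  path e v (take i p) /\ path e (last v (take i p)) (drop i p).
Proof. by move=> Hp; move: Hp; rewrite -[X in path _ _ X -> _](cat_take_drop i) cat_path => /andP. Qed.

Lemma last_split (v : T) (p : seq T) i : last (last v (take i p)) (drop i p) = last v p.
Proof. by rewrite -last_cat cat_take_drop. Qed.

Lemma cross (D : distribution T) r d v w p q i j : irreflexive e -> v != w ->
  path e v p -> path e w q -> last w q = r -> size p = d -> size q = d ->
  i <= j -> j < d -> 2^(d-1) <= D v -> 2^(d-1) <= D w ->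
  last v (take i p) = last w (take j q) -> deliv D r 1.
Proof.
move=> Hirr Hvw Hp Hq Hlq Hsp Hsq Hij Hjd HDv HDw Heq.
set y := last w (take j q).
have [Hpi _] := path_split _ _ i Hp.
have [Hqj Hyd] := path_split _ _ j Hq.
have Hly : last y (drop j q) = r by rewrite /y last_split.
have szi : size (take i p) = i by rewrite size_takel // Hsp; lia.
have szj : size (take j q) = j by rewrite size_takel // Hsq; lia.
have szd : size (drop j q) = d - j by rewrite size_drop Hsq.
have M1 := move _ _ (2^(d-1-i)) Hirr Hpi; rewrite szi Heq -/y in M1.
have M2 := move _ _ (2^(d-1-j)) Hirr Hqj; rewrite szj -/y in M2.
have M3 := move _ _ 1 Hirr Hyd; rewrite szd Hly in M3.
have [Dc [HR HDc]] := deliv_combine _ _ _ _ _ _ _ M1 M2.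
have EA : 2^(d-1-i) * 2^i = 2^(d-1) by rewrite -expnD subnK //; lia.
have EB : 2^(d-1-j) * 2^j = 2^(d-1) by rewrite -expnD subnK //; lia.
have E3 : 2^(d-j) = 2 * 2^(d-1-j).
  by rewrite -expnS; congr (2 ^ _); lia.
have E4 : 2^(d-1-j) <= 2^(d-1-i) by apply: leq_pexp2l => //; lia.
apply: (deliv_mono D (addf (pt v (2^(d-1-i) * 2^i)) (pt w (2^(d-1-j) * 2^j)))).
  move=> x; rewrite !ffunE EA EB.
  case: (x =P v) => [->|/eqP Hxv]; first by rewrite (negbTE Hvw) addn0.
  rewrite add0n; by case: (x =P w) => [->|].
apply: (deliv_trans _ _ _ _ HR).
apply: deliv_mono M3.
apply: pt_le; rewrite -/y; lia.
Qed.


Lemma same_ij (v : T) p r d i j : path e v p -> last v p = r -> dist e v r = d ->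
  i < j -> j <= d -> size p = d -> last v (take i p) = last v (take j p) -> False.
Proof.
move=> Hp Hl Hd Hij Hjd Hs Heq.
have [Hpi _] := path_split _ _ i Hp.
have [_ Hpj] := path_split _ _ j Hp.
have Hc : path e v (take i p ++ drop j p) by rewrite cat_path Hpi Heq Hpj.
have := dist_le _ _ Hc.
rewrite last_cat Heq last_split Hl Hd size_cat size_drop size_takel; lia.
Qed.

Lemma not_r (v : T) p r d i : path e v p -> dist e v r = d -> size p = d -> i < d ->
  last v (take i p) = r -> False.
Proof.
move=> Hp Hd Hs Hi Hl.
have [Hpi _] := path_split _ _ i Hp.
have := dist_le _ _ Hpi; rewrite Hl Hd size_takel; lia.
Qed.

End Peb.

Arguments addf {T}. Arguments pt {T}. Arguments deliv {T}.
Arguments dist_walk {T e}. Arguments dist_diam {T}. Arguments deliv_mono {T}.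
Arguments same_ij {T}. Arguments cross {T}. Arguments not_r {T}.

Theorem theorem2 (T : finType) (e : rel T) :
  simple_graph e -> connected_graph e -> 2 <= #|T| ->
  pebbling_number_le e
    ((#|T| + (#|T| - 1) %/ diam e - 1) * 2 ^ (diam e - 1) - #|T| + 2).
Proof.
move=> [Hsym Hirr] Hc Hn.
set n := #|T|; set d := diam e.
have Hd1 : 1 <= d.
  have [u _] : exists u : T, u \in [set: T] by apply/card_gt0P; rewrite cardsT -/n; lia.
  have [v Hv] : exists v : T, v \in [set~ u] by apply/card_gt0P; rewrite cardsC1 -/n; lia.
  rewrite inE in Hv.
  have [s [Hs Hl Hsz]] := dist_walk Hc u v.
  have := dist_diam e u v; rewrite -/d -Hsz.
  case: s Hs Hl {Hsz} => [|x s'] _ /= Hl.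
    by move: Hv; rewrite -Hl !inE eqxx.
  by move=> H; apply: leq_trans H.
eexists; split; first exact: leqnn.
move=> D HD r; apply: NNPP => Hns.
have Hnd : ~ deliv e D r 1 by exact: Hns.
have Hr : D r = 0.
  case: (posnP (D r)) => // Hpos; exfalso; apply: Hnd.
  by exists D; split => //; exact: reach_refl.
have Hb : forall v, D v < 2 ^ dist e v r.
  move=> v; rewrite ltnNge; apply/negP => H.
  have [s [Hs Hl Hsz]] := dist_walk Hc v r.
  apply: Hnd; apply: (deliv_mono e D (pt v (1 * 2 ^ size s))).
    by apply: pt_le; rewrite mul1n Hsz.
  by rewrite -Hl; exact: move.
set K := [set v | 2 ^ (d - 1) <= D v].
have HK : forall v, v \in K -> dist e v r = d.
  move=> v; rewrite inE => Hv.
  have := Hb v; have := dist_diam e v r; rewrite -/d => H1 H2.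
  have : 2 ^ (d - 1) < 2 ^ dist e v r by lia.
  rewrite ltn_exp2l //; lia.
pose ps v : seq T := if [pick p : d.-tuple T | path e v p && (last v p == r)] is Some p
  then tval p else [::].
have Hps : forall v, v \in K -> [/\ path e v (ps v), last v (ps v) = r & size (ps v) = d].
  move=> v Kv; rewrite /ps; case: pickP => [p /andP[H1 /eqP H2]|Hnone].
    by rewrite size_tuple.
  exfalso; have [s [Hs Hl Hsz]] := dist_walk Hc v r; rewrite HK // in Hsz.
  by have := Hnone (@Tuple d T s (introT eqP Hsz)); rewrite /= Hs Hl eqxx.
pose f (x : T * 'I_d) := last x.1 (take x.2 (ps x.1)).
have Hinj : {in setX K [set: 'I_d] &, injective f}.
  move=> [v i] [w j]; rewrite !in_setX !in_setT /= !andbT => Kv Kw; rewrite /f /= => Heq.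
  have [Hpv Hlv Hsv] := Hps v Kv; have [Hpw Hlw Hsw] := Hps w Kw.
  case: (v =P w) => [Evw|/eqP Nvw].
    subst w; congr pair; apply: val_inj => /=.
    case: (ltngtP i j) => // Hij; exfalso.
      exact: (same_ij e v (ps v) r d i j Hpv Hlv (HK v Kv) Hij (ltnW (ltn_ord j)) Hsv Heq).
    exact: (same_ij e v (ps v) r d j i Hpv Hlv (HK v Kv) Hij (ltnW (ltn_ord i)) Hsv (esym Heq)).
  exfalso; apply: Hnd.
  have HDv : 2 ^ (d - 1) <= D v by rewrite inE in Kv.
  have HDw : 2 ^ (d - 1) <= D w by rewrite inE in Kw.
  case: (leqP i j) => Hij.
    exact: (cross e D r d v w (ps v) (ps w) i j Hirr Nvw Hpv Hpw Hlw Hsv Hsw Hij (ltn_ord j) HDv HDw Heq).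
  rewrite eq_sym in Nvw.
  exact: (cross e D r d w v (ps w) (ps v) j i Hirr Nvw Hpw Hpv Hlv Hsw Hsv (ltnW Hij) (ltn_ord i) HDw HDv (esym Heq)).
have Himg : f @: setX K [set: 'I_d] \subset [set~ r].
  apply/subsetP => y /imsetP [[v i]]; rewrite in_setX in_setT /= andbT => Kv ->; rewrite /f /= !inE.
  have [Hpv Hlv Hsv] := Hps v Kv.
  apply/eqP => Hl; exact: (not_r e v (ps v) r d i Hpv (HK v Kv) Hsv (ltn_ord i) Hl).
have HKd : #|K| * d <= n - 1.
  have := subset_leq_card Himg.
  by rewrite card_in_imset // cardsX cardsT card_ord cardsC1 -/n subn1.
have HKq : #|K| <= (n - 1) %/ d by rewrite leq_divRL.
set P := 2 ^ (d - 1).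
have HP : 1 <= P by rewrite expn_gt0.
have HPd : 2 ^ d = 2 * P by rewrite /P -expnS; congr (2 ^ _); lia.
have Hsum : dsize D <= (n - 1) * (P - 1) + #|K| * P.
  rewrite /dsize (bigD1 r) //= Hr add0n.
  apply: (@leq_trans (\sum_(v | v != r) ((P - 1) + (v \in K) * P))).
    apply: leq_sum => v Hv /=.
    have := Hb v; have := dist_diam e v r; rewrite -/d => H1 H2.
    have H3 : 2 ^ dist e v r <= 2 ^ d by apply: leq_pexp2l.
    case: (boolP (v \in K)); rewrite inE => HvK /=; lia.
  rewrite big_split /= sum_nat_const cardC1 -/n -subn1 leq_add2l.
  apply: leq_trans (_ : \sum_v (v \in K) * P <= _).
    by rewrite [X in _ <= X](bigD1 r) //= leq_addl.
  rewrite -sum_nat_const; apply: eq_leq; rewrite [RHS]big_mkcond; apply: eq_bigr => v _.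
  by case: (v \in K); rewrite ?mul1n ?mul0n.
have HKP : #|K| * P <= (n - 1) %/ d * P by rewrite leq_mul2r HKq orbT.
move: Hsum; rewrite HD -/n -/P.
set q := (n - 1) %/ d.
move: HKP; rewrite -/q.
have E1 : (n + q - 1) * P = (n - 1) * P + q * P.
  by rewrite -mulnDl; congr (_ * _); lia.
have E2 : (n - 1) * (P - 1) = (n - 1) * P - (n - 1) by rewrite mulnBr muln1.
have E3 : n - 1 <= (n - 1) * P by rewrite -{1}[n - 1]muln1 leq_mul2l HP orbT.
rewrite E1 E2.
move: E3; generalize ((n - 1) * P) (q * P) (#|K| * P) => Z Y X.
have Hn2 : 2 <= n by [].
lia.
Qed.
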